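(* Let $A\in\mathbb{R}^{n\times n}$ and $B\in\mathbb{R}^{m\times m}$, and define $C:=\operatorname{diag}(A,B)\in\mathbb{R}^{(n+m)\times(n+m)}$. Pick $k\in\{1,\dots,n+m\}$, let $r:=\binom{n+m}{k}$, $i_1:=\max\{0,k-n\}$ and $i_2:=\min\{m,k\}$. Then there exists a permutation matrix $P\in\mathbb{R}^{r\times r}$ such that \[ C^{(k)}=P\left(\operatorname{diag}_{i\in\{i_1,\dots,i_2\}}\big(A^{(k-i)}\otimes B^{(i)}\big)\right)P^{-1} \] and \[ C^{[k]}=P\left(\operatorname{diag}_{i\in\{i_1,\dots,i_2\}}\big(A^{[k-i]}\oplus B^{[i]}\big)\right)P^{-1}. \]
   Context: For $M\in\mathbb{R}^{p\times q}$ and $k\le\min\{p,q\}$, the $k$th multiplicative compound $M^{(k)}$ is the $\binom{p}{k}\times\binom{q}{k}$ matrix of all $k\times k$ minors of $M$, rows and columns indexed by increasing $k$-tuples of indices in lexicographic order. For square $M$, the $k$th additive compound is $M^{[k]}:=\frac{d}{dt}(\exp(Mt))^{(k)}\big|_{t=0}$. For square $M$, $M^{(0)}:=1$ and $M^{[0]}:=0$ (as $1\times1$ matrices). $\otimes$ is the Kronecker product, and the Kronecker sum of $X\in\mathbb{R}^{a\times a}$, $Y\in\mathbb{R}^{b\times b}$ is $X\oplus Y:=X\otimes I_b+I_a\otimes Y$. $\operatorname{diag}_{i\in\{i_1,\dots,i_2\}}(M_i)$ denotes the block-diagonal matrix with diagonal blocks $M_{i_1},M_{i_1+1},\dots,M_{i_2}$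 in this order. *)

(* Defs.v *)
From HB Require Import structures.
From mathcomp Require Import all_boot all_order all_algebra.
From mathcomp Require Import all_classical all_reals all_analysis.
From mathcomp Require Import zify.
Set Implicit Arguments. Unset Strict Implicit. Unset Printing Implicit Defensive.
Import Order.TTheory GRing.Theory Num.Theory numFieldNormedType.Exports.
Local Open Scope ring_scope.

(* Increasing k-element subsequences of a (sorted) list s, listed in
   lexicographic order.  For s = [:: 0; ...; p-1] these are the increasing
   k-tuples of indices in lexicographic order. *)
Fixpoint ksubs (s : seq nat) (k : nat) : seq (seq nat) :=
  match s, k with
  | _, 0%N => [:: [::]]
  | [::], _.+1 => [::]
  | x :: s', k'.+1 => map (cons x) (ksubs s' k') ++ ksubs s' k
  end.

Definition ktuple (p k a : nat) : seq nat := nth [::] (ksubs (iota 0 p) k) a.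

(* entry of a matrix addressed by natural-number indices (0 out of range) *)
Definition mget (R : nzRingType) p q (M : 'M[R]_(p, q)) (i j : nat) : R :=
  match insub i, insub j with
  | Some i', Some j' => M i' j'
  | _, _ => 0
  end.

Definition mulc (R : comNzRingType) p q (k : nat) (M : 'M[R]_(p, q))
  : 'M[R]_('C(p, k), 'C(q, k)) :=
  \matrix_(a, b) \det (\matrix_(x < k, y < k)
      mget M (nth 0%N (ktuple p k a) x) (nth 0%N (ktuple q k b) y)).

Definition kron (R : nzRingType) a1 a2 b1 b2 (A : 'M[R]_(a1, a2))
  (B : 'M[R]_(b1, b2)) : 'M[R]_(a1 * b1, a2 * b2) :=
  \matrix_(i, j) (mget A (i %/ b1) (j %/ b2) * mget B (i %% b1) (j %% b2)).

Definition ksum (R : nzRingType) a b (X : 'M[R]_a) (Y : 'M[R]_b)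
  : 'M[R]_(a * b) := kron X 1%:M + kron 1%:M Y.

Definition mexp (R : realType) n (M : 'M[R]_n) : 'M[R]_n :=
  \matrix_(i, j) limn (fun N : nat => ((\sum_(l < N) (l`!%:R)^-1 *: M ^+ l) i j : R)).

Definition addc (R : realType) n (k : nat) (M : 'M[R]_n) : 'M[R]_('C(n, k)) :=
  \matrix_(a, b) derive1 (fun t : R => mulc k (mexp (t *: M)) a b) 0.

(* block index range i1 = max(0,k-n), ..., i2 = min(m,k) *)
Definition i1 (n m k : nat) : nat := (k - n)%N.
Definition i2 (n m k : nat) : nat := minn m k.
Definition nblk (n m k : nat) : nat := ((i2 n m k).+1 - i1 n m k)%N.
Definition bsize (n m k : nat) (j : 'I_(nblk n m k)) : nat :=
  ('C(n, k - (i1 n m k + j)) * 'C(m, i1 n m k + j))%N.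
Arguments bsize n m k j : clear implicits.

Section BsizeSum.
Local Open Scope nat_scope.
Lemma bsize_sum n m k : (\sum_j bsize n m k j)%N = 'C(n + m, k).
Proof.
rewrite /bsize /nblk /i2 /i1.
have [Hk|Hk] := leqP k (n + m); last first.
  rewrite bin_small // big1 // => j _; have := ltn_ord j; lia.
set f := fun i => ('C(n, k - i) * 'C(m, i))%N.
rewrite (eq_bigr (fun j : 'I_ _ => f (k - n + j)%N)) //.
rewrite -(big_mkord xpredT (fun j => f (k - n + j)%N)).
have -> : \sum_(0 <= i < (minn m k).+1 - (k - n)) f (k - n + i)%N
   = \sum_(k - n <= i < (minn m k).+1) f i.
  by rewrite -[in RHS](add0n (k - n)) big_addn; apply: eq_bigr => i _; rewrite addnC.
rewrite addnC -binomial.Vandermonde -(big_mkord xpredT (fun j => 'C(m, j) * 'C(n, k - j))%N).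
rewrite [RHS](big_cat_nat _ (n:=k - n)) //=; last lia.
rewrite [X in (_ + X)%N](big_cat_nat _ (m:=k-n) (n:=(minn m k).+1)) //=; try lia.
rewrite [X in _ = (X + _)%N]big1_seq ?add0n; last first.
  move=> i /andP[_]; rewrite mem_index_iota => /andP[_ Hi] /=.
  rewrite [X in (_ * X)%N]bin_small ?muln0 //; lia.
rewrite [X in _ = (_ + X)%N]big1_seq ?addn0; last first.
  move=> i /andP[_]; rewrite mem_index_iota => /andP[Hi Hi2].
  have [Hm|Hm] := leqP i m; last by rewrite /= (bin_small Hm) mul0n.
  rewrite /= [X in (_ * X)%N]bin_small ?muln0 //; lia.
by apply: eq_bigr => i _; rewrite /f mulnC.
Qed.
End BsizeSum.

Definition Dmul (R : comNzRingType) n m k (A : 'M[R]_n) (B : 'M[R]_m)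
  : 'M[R]_(\sum_j bsize n m k j) :=
  \mxdiag_(j < nblk n m k)
     kron (mulc (k - (i1 n m k + j)) A) (mulc (i1 n m k + j) B).

Definition Dadd (R : realType) n m k (A : 'M[R]_n) (B : 'M[R]_m)
  : 'M[R]_(\sum_j bsize n m k j) :=
  \mxdiag_(j < nblk n m k)
     ksum (addc (k - (i1 n m k + j)) A) (addc (i1 n m k + j) B).

(* Main.v *)
Require Import Defs.
From HB Require Import structures.
From mathcomp Require Import all_boot all_order all_algebra.
From mathcomp Require Import all_classical all_reals all_analysis.
From mathcomp Require Import all_fingroup zify ring lra.
Set Implicit Arguments. Unset Strict Implicit. Unset Printing Implicit Defensive.
Import Order.TTheory GRing.Theory Num.Theory numFieldNormedType.Exports.

Definition inrange a p (x : nat) := (a <= x) && (x < a + p).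

Lemma mem_ksubs a p k x :
  (x \in ksubs (iota a p) k) = [&& sorted ltn x, all (inrange a p) x & size x == k].
Proof.
elim: p a k x => [|p IH] a [|k] x.
- rewrite /= inE; case: x => [|y x] //=. by rewrite !andbF.
- by case: x => [|y x] //=; rewrite /inrange addn0; case: (leqP a y) => //=; rewrite andbF.
- rewrite /= inE; case: x => [|y x] //=. by rewrite !andbF.
rewrite /= mem_cat; case: x => [|y x].
  rewrite /=.
  rewrite IH /= ?andbF ?orbF; apply/negbTE/mapP => -[? _]. done.
have cinj : injective (cons a) by move=> u v [].
have [->|ya] := eqVneq y a.
  rewrite (mem_map cinj) IH IH.
  rewrite /inrange /= ltnn andbF orbF /= leqnn /= eqSS (path_sortedE ltn_trans).
  have -> : all (fun x0 => a.+1 <= x0 < a.+1 + p) x =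
     all (ltn a) x && all (fun x0 => a <= x0 < a + p.+1) x.
    by rewrite -all_predI; apply: eq_all => z /=; lia.
  have -> : a < a + p.+1 by lia.
  by case: (sorted _ x); case: (all (ltn a) x); case: (all _ x).
rewrite (_ : (y :: x \in [seq a :: i | i <- _]) = false); last first.
  by apply/negbTE/mapP => -[u _ [/eqP]]; rewrite (negbTE ya).
rewrite IH /= /inrange eqSS.
have -> : (a.+1 <= y) && (y < a.+1 + p) = (a <= y) && (y < a + p.+1) by lia.
have -> : all (fun x0 => a.+1 <= x0 < a.+1 + p) x = all (fun x0 => a <= x0 < a + p.+1) x && all (ltn a) x.
  rewrite -all_predI; apply: eq_all => z /=.
  lia.
case/boolP: (path ltn y x) => //= Hp.
case/boolP: (a <= y < a + p.+1) => //= Hy.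
have -> // : all (ltn a) x; last by rewrite andbT.
apply/allP => z zx; have := allP (order_path_min ltn_trans Hp) z zx => /=; lia.
Qed.

Lemma uniq_ksubs a p k : uniq (ksubs (iota a p) k).
Proof.
elim: p a k => [|p IH] a [|k] //=.
rewrite cat_uniq map_inj_uniq ?IH //=; last by move=> u v [].
rewrite andbT; apply/hasPn => x; rewrite mem_ksubs => /and3P[_ ax _].
apply/mapP => -[u _ xu]; move: ax; rewrite xu /= /inrange; lia.
Qed.

Lemma size_ksubs s k : size (ksubs s k) = 'C(size s, k).
Proof.
elim: s k => [|x s IH] [|k] //=.
by rewrite size_cat size_map !IH binS addnC.
Qed.

Section Comb.
Variables n m k : nat.

Definition cnt (S : seq nat) := count (fun x => n <= x) S.
Definition lo (S : seq nat) := seq.filter (fun x => x < n) S.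
Definition hi (S : seq nat) := map (subn^~ n) (seq.filter (fun x => n <= x) S).
Definition al S := index (lo S) (ksubs (iota 0 n) (k - cnt S)).
Definition be S := index (hi S) (ksubs (iota 0 m) (cnt S)).

Definition goodS (S : seq nat) := [&& sorted ltn S, all (inrange 0 (n + m)) S & size S == k].

Lemma ktuple_good (a : nat) : a < 'C(n + m, k) -> goodS (ktuple (n + m) k a).
Proof.
move=> ha; rewrite /goodS -mem_ksubs /ktuple mem_nth //.
by rewrite size_ksubs size_iota.
Qed.

Section Good.
Variable S : seq nat.
Hypothesis gS : goodS S.

Lemma cnt_lo : size (lo S) = k - cnt S.
Proof.
case/and3P: gS => _ _ /eqP <-; rewrite /lo /cnt size_filter.
rewrite -(count_predC (fun x => x < n)).
have -> : count (predC (fun x => x < n)) S = count (fun x => n <= x) S.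
  by apply: eq_count => x /=; rewrite -leqNgt.
by rewrite addnK.
Qed.

Lemma lo_mem : lo S \in ksubs (iota 0 n) (k - cnt S).
Proof.
case/and3P: gS => sS aS _.
rewrite mem_ksubs cnt_lo eqxx andbT sorted_filter //=; last exact: ltn_trans.
by apply/allP => x; rewrite mem_filter /inrange => /andP[] /=; lia.
Qed.

Lemma hi_mem : hi S \in ksubs (iota 0 m) (cnt S).
Proof.
case/and3P: gS => sS aS _.
rewrite mem_ksubs /hi size_map size_filter eqxx andbT sorted_map.
apply/andP; split.
  apply: (@sub_in_sorted _ [pred x | n <= x] ltn).
  - by move=> x y; rewrite !inE => hx hy /=; lia.
  - by apply/allP => x; rewrite mem_filter => /andP[].
  - by apply: sorted_filter => //; exact: ltn_trans.
rewrite all_map; apply/allP => x; rewrite mem_filter => /andP[/= hx xS].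
by have := allP aS x xS; rewrite /inrange /=; lia.
Qed.

Lemma al_lt : al S < 'C(n, k - cnt S).
Proof. by rewrite /al -{2}(size_iota 0 n) -size_ksubs index_mem lo_mem. Qed.

Lemma be_lt : be S < 'C(m, cnt S).
Proof. by rewrite /be -{2}(size_iota 0 m) -size_ksubs index_mem hi_mem. Qed.

Lemma cnt_bounds : [/\ cnt S <= m, k - cnt S <= n & cnt S <= k].
Proof.
have h1 := al_lt; have h2 := be_lt.
split.
- by rewrite -bin_gt0; lia.
- by rewrite -bin_gt0; lia.
case/and3P: gS => _ _ /eqP <-; exact: count_size.
Qed.

Lemma ktuple_al : ktuple n (k - cnt S) (al S) = lo S.
Proof. by rewrite /ktuple /al nth_index // lo_mem. Qed.

Lemma ktuple_be : ktuple m (cnt S) (be S) = hi S.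
Proof. by rewrite /ktuple /be nth_index // hi_mem. Qed.

Lemma split_S : S = lo S ++ map (addn n) (hi S).
Proof.
case/and3P: gS => sS _ _.
have -> : map (addn n) (hi S) = seq.filter (fun x => n <= x) S.
  rewrite /hi -map_comp -[RHS]map_id; apply/eq_in_map => x.
  by rewrite mem_filter => /andP[/= hx _]; lia.
rewrite /lo; elim: S sS => //= x s IH /[dup] /path_sorted sS Hp.
case: (ltnP x n) => hx /=; first by rewrite -IH.
have /allP amin := order_path_min ltn_trans Hp.
rewrite (@eq_in_filter _ _ pred0); last by move=> y /amin /=; lia.
rewrite filter_pred0 /= (@eq_in_filter _ _ predT) ?filter_predT //.
by move=> y /amin /=; lia.
Qed.

Lemma nth_S x : x < k ->
  nth 0 S x = if x < k - cnt S then nth 0 (lo S) x else n + nth 0 (hi S) (x - (k - cnt S)).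
Proof.
move=> xk; rewrite {1}split_S nth_cat cnt_lo; case: ifP => // hx.
have [_ _ ck] := cnt_bounds.
rewrite (nth_map 0) //; rewrite /hi size_map size_filter; rewrite -/(cnt S); lia.
Qed.

End Good.
End Comb.

Section Enc.
Variables (n m k : nat).
Local Notation r := 'C(n + m, k).
Local Notation Sa a := (ktuple (n + m) k a).

Lemma jlt (a : 'I_r) : (cnt n (Sa a) - (k - n) < nblk n m k)%N.
Proof.
have [c1 c2 c3] := cnt_bounds (ktuple_good (ltn_ord a)).
rewrite /nblk /i2 /i1; lia.
Qed.

Definition jo (a : 'I_r) : 'I_(nblk n m k) := Ordinal (jlt a).

Lemma i1j (a : 'I_r) : (i1 n m k + jo a)%N = cnt n (Sa a).
Proof.
have [c1 c2 c3] := cnt_bounds (ktuple_good (ltn_ord a)).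
rewrite /i1 /=; lia.
Qed.

Lemma xlt (a : 'I_r) :
  (al n k (Sa a) * 'C(m, cnt n (Sa a)) + be n m (Sa a) < bsize n m k (jo a))%N.
Proof.
have g := ktuple_good (ltn_ord a).
rewrite /bsize i1j.
have h1 := al_lt g; have h2 := be_lt g.
apply: (@leq_trans ((al n k (Sa a)).+1 * 'C(m, cnt n (Sa a)))); first by rewrite mulSn; lia.
by rewrite leq_mul2r h1 orbT.
Qed.

Definition xo (a : 'I_r) : 'I_(bsize n m k (jo a)) := Ordinal (xlt a).

Definition go (a : 'I_r) : 'I_r :=
  cast_ord (bsize_sum n m k) (@tagnat.Rank _ (bsize n m k) (jo a) (xo a)).

Lemma go_inj : injective go.
Proof.
move=> a b /(congr1 val) /= /eqP; rewrite tagnat.eq_Rank => /andP[/eqP ej /eqP ex].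
have ga := ktuple_good (ltn_ord a); have gb := ktuple_good (ltn_ord b).
have ec : cnt n (Sa a) = cnt n (Sa b) by rewrite -!i1j ej.
move: ex => /=; rewrite ec.
have h1 := be_lt ga; have h2 := be_lt gb; rewrite ec in h1.
move=> /(congr1 (fun z => (z %/ 'C(m, cnt n (Sa b)), z %% 'C(m, cnt n (Sa b)))%N)) /=.
rewrite !divnMDl ?modnMDl ?divn_small ?modn_small ?addn0 //; try lia.
case=> eal ebe.
have elo : lo n (Sa a) = lo n (Sa b) by rewrite -(ktuple_al ga) -(ktuple_al gb) eal ec.
have ehi : hi n (Sa a) = hi n (Sa b) by rewrite -(ktuple_be ga) -(ktuple_be gb) ebe ec.
have eS : Sa a = Sa b by rewrite (split_S ga) (split_S gb) elo ehi.
apply: val_inj; move: eS; rewrite /ktuple => /(congr1 (fun s => index s (ksubs (iota 0 (n + m)) k))).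
rewrite !index_uniq ?uniq_ksubs // size_ksubs size_iota ltn_ord //.
Qed.

Definition sigma : 'S_r := perm go_inj.

End Enc.

Local Open Scope ring_scope.

Section Mget.
Variable R : nzRingType.

Lemma mgetE p q (M : 'M[R]_(p, q)) (i : 'I_p) (j : 'I_q) : mget M i j = M i j.
Proof. by rewrite /mget !valK. Qed.

Lemma mget_out p q (M : 'M[R]_(p, q)) i j : ~~ ((i < p)%N && (j < q)%N) -> mget M i j = 0.
Proof.
rewrite negb_and /mget => /orP[h|h]; first by rewrite insubF //; apply/negbTE.
by case: insubP => // *; rewrite insubF //; apply/negbTE.
Qed.

Lemma mget_ord p q (M : 'M[R]_(p, q)) i j (hi : (i < p)%N) (hj : (j < q)%N) :
  mget M i j = M (Ordinal hi) (Ordinal hj).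
Proof. by rewrite -mgetE. Qed.

Lemma mget1 p i j : mget (1%:M : 'M[R]_p) i j = ((i == j) && (i < p)%N)%:R.
Proof.
have [hi|hi] := boolP (i < p)%N; last by rewrite mget_out ?(negbTE hi) // andbF.
have [hj|hj] := boolP (j < p)%N; last first.
  rewrite mget_out ?(negbTE hj) ?andbF //; by case: eqP => // e; rewrite -e hi in hj.
by rewrite (mget_ord _ hi hj) mxE /= andbT.
Qed.

Lemma mget_block n m (X : 'M[R]_n) (Y : 'M[R]_m) u v :
  mget (block_mx X 0 0 Y) u v =
  if (u < n)%N then (if (v < n)%N then mget X u v else 0)
  else (if (v < n)%N then 0 else mget Y (u - n) (v - n)).
Proof.
have [hu|hu] := boolP (u < n + m)%N; last first.
  rewrite mget_out ?(negbTE hu) //; case: ifP => un; first lia.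
  by case: ifP => // _; rewrite mget_out //; lia.
have [hv|hv] := boolP (v < n + m)%N; last first.
  rewrite mget_out ?(negbTE hv) ?andbF //; case: ifP => un; case: ifP => vn //; try lia.
    by rewrite mget_out //; lia.
rewrite (mget_ord _ hu hv).
case: ifP => un; case: ifP => vn.
- have -> : Ordinal hu = lshift m (Ordinal un) by apply: val_inj.
  have -> : Ordinal hv = lshift m (Ordinal vn) by apply: val_inj.
  by rewrite block_mxEul (mget_ord X un vn).
- have -> : Ordinal hu = lshift m (Ordinal un) by apply: val_inj.
  have hv' : (v - n < m)%N by lia.
  have -> : Ordinal hv = rshift n (Ordinal hv') by apply: val_inj => /=; lia.
  by rewrite block_mxEur mxE.
- have hu' : (u - n < m)%N by lia.
  have -> : Ordinal hu = rshift n (Ordinal hu') by apply: val_inj => /=; lia.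
  have -> : Ordinal hv = lshift m (Ordinal vn) by apply: val_inj.
  by rewrite block_mxEdl mxE.
- have hu' : (u - n < m)%N by lia.
  have -> : Ordinal hu = rshift n (Ordinal hu') by apply: val_inj => /=; lia.
  have hv' : (v - n < m)%N by lia.
  have -> : Ordinal hv = rshift n (Ordinal hv') by apply: val_inj => /=; lia.
  by rewrite block_mxEdr (mget_ord Y hu' hv').
Qed.

End Mget.

Definition detF (R : comNzRingType) k (F : nat -> nat -> R) :=
  \det (\matrix_(x < k, y < k) F x y).

Section DetF.
Variable R : comNzRingType.

Lemma eq_detF k (F G : nat -> nat -> R) :
  (forall x y, (x < k)%N -> (y < k)%N -> F x y = G x y) -> detF k F = detF k G.
Proof. by move=> e; rewrite /detF; congr (\det _); apply/matrixP => x y; rewrite !mxE e. Qed.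

Lemma detF_tr k (F : nat -> nat -> R) : detF k F = detF k (fun x y => F y x).
Proof. by rewrite /detF -det_tr; congr (\det _); apply/matrixP => x y; rewrite !mxE. Qed.

Lemma detF_block p1 p2 (F : nat -> nat -> R) :
  (forall x y, (x < p1)%N != (y < p1)%N -> (x < p1 + p2)%N -> (y < p1 + p2)%N -> F x y = 0) ->
  detF (p1 + p2) F = detF p1 F * detF p2 (fun x y => F (p1 + x)%N (p1 + y)%N).
Proof.
move=> F0; rewrite /detF -(det_ublock _ 0); congr (\det _); apply/matrixP => x y.
rewrite [LHS]mxE; case: (split_ordP x) => x' -> ; case: (split_ordP y) => y' -> ; rewrite ?block_mxEul ?block_mxEur ?block_mxEdl ?block_mxEdr !mxE //=.
- by have := ltn_ord x'; have := ltn_ord y'; move=> *; apply: F0; lia.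
- by have := ltn_ord x'; have := ltn_ord y'; move=> *; apply: F0; lia.
Qed.

Lemma detF_zero k (F : nat -> nat -> R) p q : (q < p)%N -> (p <= k)%N ->
  (forall x y, (x < p)%N -> (q <= y)%N -> (y < k)%N -> F x y = 0) -> detF k F = 0.
Proof.
move=> qp pk F0; rewrite /detF /determinant big1 // => s _.
case: (boolP [forall i : 'I_k, (i < p)%N ==> (s i < q)%N]) => [/forallP H|].
  have fP (x : 'I_p) : (s (widen_ord pk x) < q)%N by apply: (implyP (H _)); rewrite /= ltn_ord.
  pose f (x : 'I_p) : 'I_q := Ordinal (fP x).
  have finj : injective f.
    move=> x y /(congr1 val) /= /val_inj /perm_inj /(congr1 val) /= e; exact: val_inj.
  by have := leq_card f finj; rewrite !card_ord; lia.
rewrite negb_forall => /existsP[i]; rewrite negb_imply => /andP[ip siq].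
rewrite (bigD1 i) //= mxE F0 ?ltn_ord //; last lia.
by rewrite mul0r mulr0.
Qed.

End DetF.

Lemma mxdiag_Rank (V : nmodType) nb (p_ : 'I_nb -> nat) (B_ : forall i, 'M[V]_(p_ i))
   (G : 'I_nb -> nat -> nat -> V) i i' (x : 'I_(p_ i)) (y : 'I_(p_ i')) :
 (forall i (x y : 'I_(p_ i)), B_ i x y = G i x y) ->
 mxdiag B_ (@tagnat.Rank _ p_ i x) (@tagnat.Rank _ p_ i' y) = if i == i' then G i x y else 0.
Proof.
move=> BG; rewrite /mxdiag /mxblock mxE /tagnat.sig1 /tagnat.sig2 /tagnat.Rank /=.
rewrite !tagnat.rankK /=.
case: eqVneq => [e|ne]; last by rewrite mxE.
by case: i' / e y => y; rewrite conform_mx_id BG.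
Qed.

Lemma perm_conj (R : comUnitRingType) r (s : 'S_r) (D : 'M[R]_r) a b :
  (perm_mx s *m D *m invmx (perm_mx s)) a b = D (s a) (s b).
Proof.
have -> : invmx (perm_mx s) = perm_mx (s^-1)%g :> 'M[R]_r.
  have e : perm_mx s *m perm_mx (s^-1)%g = 1%:M :> 'M[R]_r.
    by rewrite -(perm_mxM R s) mulgV perm_mx1.
  by rewrite -[LHS]mulmx1 -e mulmxA mulVmx ?unitmx_perm // mul1mx.
by rewrite -col_permE -row_permE !mxE.
Qed.

Lemma mget_mulc (R : comNzRingType) p p' q (M : 'M[R]_(p, p')) u v :
  (u < 'C(p, q))%N -> (v < 'C(p', q))%N ->
  mget (mulc q M) u v =
  detF q (fun x y => mget M (nth 0%N (ktuple p q u) x) (nth 0%N (ktuple p' q v) y)).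
Proof. by move=> hu hv; rewrite (mget_ord _ hu hv) mxE. Qed.

Lemma detF_block' (R : comNzRingType) k p1 p2 (F : nat -> nat -> R) : k = (p1 + p2)%N ->
  (forall x y, (x < p1)%N != (y < p1)%N -> (x < k)%N -> (y < k)%N -> F x y = 0) ->
  detF k F = detF p1 F * detF p2 (fun x y => F (p1 + x)%N (p1 + y)%N).
Proof. by move=> -> ; exact: detF_block. Qed.

Section Key.
Variables (n m k : nat).

Lemma nth_S_lt S x : goodS n m k S -> (x < k)%N ->
  (nth 0%N S x < n)%N = (x < k - cnt n S)%N.
Proof.
move=> gS xk; rewrite (nth_S gS xk); case: ifP => hx; last lia.
have : nth 0%N (lo n S) x \in lo n S by rewrite mem_nth // (cnt_lo gS).
by rewrite mem_filter => /andP[].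
Qed.

Variable R : comNzRingType.

Lemma key (X : 'M[R]_n) (Y : 'M[R]_m) (a b : 'I_('C(n + m, k))) :
  let Sa := ktuple (n + m) k a in let Sb := ktuple (n + m) k b in
  mulc k (block_mx X 0 0 Y) a b =
  if cnt n Sa == cnt n Sb then
    mget (mulc (k - cnt n Sa) X) (al n k Sa) (al n k Sb) *
    mget (mulc (cnt n Sa) Y) (be n m Sa) (be n m Sb)
  else 0.
Proof.
move=> Sa Sb; have ga : goodS n m k Sa := ktuple_good (ltn_ord a).
have gb : goodS n m k Sb := ktuple_good (ltn_ord b).
set F := fun x y => mget (block_mx X 0 0 Y) (nth 0%N Sa x) (nth 0%N Sb y).
have -> : mulc k (block_mx X 0 0 Y) a b = detF k F by rewrite mxE.
have [ca1 ca2 ca3] := cnt_bounds ga; have [cb1 cb2 cb3] := cnt_bounds gb.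
have Fz : forall x y, (x < k)%N -> (y < k)%N ->
    (x < k - cnt n Sa)%N != (y < k - cnt n Sb)%N -> F x y = 0.
  move=> x y xk yk; rewrite /F mget_block (nth_S_lt ga xk) (nth_S_lt gb yk).
  by case: (x < _)%N; case: (y < _)%N.
case: eqP => e.
  rewrite (@detF_block' _ k (k - cnt n Sa) (cnt n Sa)); last 2 first.
  - lia.
  - by move=> x y ne xk yk; apply: Fz => //; rewrite -e.
  rewrite !mget_mulc ?(al_lt ga) ?(be_lt ga) ?(be_lt gb) //; last by rewrite e (al_lt gb).
  rewrite (ktuple_al ga) (ktuple_be ga) e (ktuple_al gb) (ktuple_be gb) -e.
  congr (_ * _); apply: eq_detF => x y xk yk; rewrite /F mget_block.
    rewrite (nth_S_lt ga) ?(nth_S_lt gb); try lia.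
    rewrite ifT; last lia. rewrite ifT; last lia.
    rewrite (nth_S ga) ?(nth_S gb); try lia.
    by rewrite ifT; try lia; rewrite ifT; try lia.
  rewrite (nth_S_lt ga) ?(nth_S_lt gb); try lia.
  rewrite ifF; last lia. rewrite ifF; last lia.
  rewrite (nth_S ga) ?(nth_S gb); try lia.
  rewrite ifF; try lia; rewrite ifF; try lia.
  rewrite !addKn; congr (mget Y (nth _ _ _) (nth _ _ _)); lia.
  by rewrite e (be_lt gb).
have [lt|lt] := ltnP (k - cnt n Sb) (k - cnt n Sa).
  apply: (@detF_zero _ _ _ (k - cnt n Sa) (k - cnt n Sb)) => //; first lia.
  move=> x y xp qy yk; apply: Fz; lia.
rewrite detF_tr.
apply: (@detF_zero _ _ _ (k - cnt n Sb) (k - cnt n Sa)) => //; try lia.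
move=> x y xp qy yk; apply: Fz; lia.
Qed.

End Key.

Section DSide.
Variables (n m k : nat).
Local Notation r := 'C(n + m, k).
Local Notation Sa a := (ktuple (n + m) k a).

Lemma go_val_div (a b : 'I_r) : cnt n (Sa a) = cnt n (Sa b) ->
  [/\ ((xo a) %/ 'C(m, cnt n (Sa a)) = al n k (Sa a))%N,
      ((xo a) %% 'C(m, cnt n (Sa a)) = be n m (Sa a))%N,
      ((xo b) %/ 'C(m, cnt n (Sa a)) = al n k (Sa b))%N &
      ((xo b) %% 'C(m, cnt n (Sa a)) = be n m (Sa b))%N].
Proof.
move=> e; have ga := ktuple_good (ltn_ord a); have gb := ktuple_good (ltn_ord b).
have h1 := be_lt ga; have h2 := be_lt gb; rewrite -e in h2.
by rewrite /= -e !divnMDl ?modnMDl ?divn_small ?modn_small ?addn0 //; lia.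
Qed.

Lemma jo_eq (a b : 'I_r) : (jo a == jo b) = (cnt n (Sa a) == cnt n (Sa b)).
Proof.
apply/eqP/eqP => [e|e]; first by rewrite -!i1j e.
by apply: val_inj; rewrite /= e.
Qed.

Lemma DM (R : comNzRingType) (A : 'M[R]_n) (B : 'M[R]_m) (a b : 'I_r) :
  (castmx (bsize_sum n m k, bsize_sum n m k) (Dmul k A B)) (go a) (go b) =
  if cnt n (Sa a) == cnt n (Sa b) then
    mget (mulc (k - cnt n (Sa a)) A) (al n k (Sa a)) (al n k (Sa b)) *
    mget (mulc (cnt n (Sa a)) B) (be n m (Sa a)) (be n m (Sa b))
  else 0.
Proof.
rewrite castmxE /go !cast_ordK /Dmul.
rewrite (@mxdiag_Rank _ _ _ _ (fun j u v =>
   mget (mulc (k - (i1 n m k + j)) A) (u %/ 'C(m, i1 n m k + j))%N (v %/ 'C(m, i1 n m k + j))%N *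
   mget (mulc (i1 n m k + j) B) (u %% 'C(m, i1 n m k + j))%N (v %% 'C(m, i1 n m k + j))%N));
  last by move=> j x y; rewrite mxE.
rewrite jo_eq; case: eqP => // e.
have [d1 d2 d3 d4] := go_val_div e.
by rewrite i1j d1 d2 d3 d4.
Qed.

Lemma DA (R : realType) (A : 'M[R]_n) (B : 'M[R]_m) (a b : 'I_r) :
  (castmx (bsize_sum n m k, bsize_sum n m k) (Dadd k A B)) (go a) (go b) =
  if cnt n (Sa a) == cnt n (Sa b) then
    mget (addc (k - cnt n (Sa a)) A) (al n k (Sa a)) (al n k (Sa b)) *
      (be n m (Sa a) == be n m (Sa b))%:R +
    (al n k (Sa a) == al n k (Sa b))%:R *
    mget (addc (cnt n (Sa a)) B) (be n m (Sa a)) (be n m (Sa b))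
  else 0.
Proof.
rewrite castmxE /go !cast_ordK /Dadd.
rewrite (@mxdiag_Rank _ _ _ _ (fun j u v =>
   mget (addc (k - (i1 n m k + j)) A) (u %/ 'C(m, i1 n m k + j))%N (v %/ 'C(m, i1 n m k + j))%N *
   mget (1%:M : 'M[R]_('C(m, i1 n m k + j))) (u %% 'C(m, i1 n m k + j))%N (v %% 'C(m, i1 n m k + j))%N +
   mget (1%:M : 'M[R]_('C(n, k - (i1 n m k + j)))) (u %/ 'C(m, i1 n m k + j))%N (v %/ 'C(m, i1 n m k + j))%N *
   mget (addc (i1 n m k + j) B) (u %% 'C(m, i1 n m k + j))%N (v %% 'C(m, i1 n m k + j))%N));
  last by move=> j x y; rewrite !mxE.
rewrite jo_eq; case: eqP => // e.
have [d1 d2 d3 d4] := go_val_div e.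
have ga := ktuple_good (ltn_ord a).
by rewrite i1j d1 d2 d3 d4 !mget1 (al_lt ga) (be_lt ga) !andbT.
Qed.

End DSide.

Section Ana.
Variable R : realType.

Lemma pow_bound p (M : 'M[R]_p) l i j :
  `|(M ^+ l) i j| <= (\sum_i0 \sum_j0 `|M i0 j0|) ^+ l.
Proof.
set b := \sum_i0 \sum_j0 `|M i0 j0|.
have colb j0 : \sum_i0 `|M i0 j0| <= b.
  apply: ler_sum => i0 _; rewrite (bigD1 j0) //= lerDl; exact: sumr_ge0.
elim: l i j => [|l IH] i j.
  by rewrite expr0 mxE; case: (i == j); rewrite /= ?normr1 ?normr0.
rewrite exprSr -mulmxE mxE exprSr.
apply: le_trans (ler_norm_sum _ _ _) _.
apply: le_trans (_ : \sum_k0 b ^+ l * `|M k0 j| <= _).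
  by apply: ler_sum => k0 _; rewrite normrM ler_wpM2r.
by rewrite -mulr_sumr ler_wpM2l // exprn_ge0 // sumr_ge0 // => ? _; exact: sumr_ge0.
Qed.

Lemma cvg_bound (c : R^nat) D b : 0 <= b ->
  (forall l, `|c l| <= D * (b ^+ l / l`!%:R)) -> cvgn (pseries c 1).
Proof.
move=> b0 H.
have D0 : 0 <= D by have := H 0%N; rewrite expr0 fact0 divr1 mulr1; apply: le_trans.
rewrite /pseries; apply: normed_cvg.
apply: (@series_le_cvg _ _ (fun l => D * (b ^+ l / l`!%:R))).
- by move=> l /=.
- by move=> l; rewrite mulr_ge0 // divr_ge0 // exprn_ge0.
- by move=> l /=; rewrite expr1n mulr1.
have -> : (fun l => D * (b ^+ l / l`!%:R)) = D *: exp_coeff b.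
  by apply/funext => l.
exact: is_cvg_seriesZ (is_cvg_series_exp_coeff b).
Qed.

Lemma diffs_bound (c : R^nat) D b : 0 <= b ->
  (forall l, `|c l| <= D * (b ^+ l / l`!%:R)) ->
  forall l, `|pseries_diffs c l| <= (D * b) * (b ^+ l / l`!%:R).
Proof.
move=> b0 H l; rewrite /pseries_diffs normrM ger0_norm //.
apply: le_trans (ler_wpM2l _ (H l.+1)) _ => //.
rewrite le_eqVlt; apply/orP; left; apply/eqP.
rewrite factS natrM exprS.
have h1 : (l.+1)%:R != 0 :> R by rewrite pnatr_eq0.
have h2 : (l`!)%:R != 0 :> R by rewrite pnatr_eq0 -lt0n fact_gt0.
by field; rewrite h2 /=; move: h1; rewrite -natr1 addrC.
Qed.

Lemma scale_exprZ p (t : R) (M : 'M[R]_p) l : (t *: M) ^+ l = t ^+ l *: M ^+ l.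
Proof.
elim: l => [|l IH]; first by rewrite !expr0 scale1r.
by rewrite !exprS -!mulmxE IH -scalemxAl -scalemxAr scalerA.
Qed.

Lemma mexp_entry_derivable p (M : 'M[R]_p) i j :
  derivable (fun t : R => mexp (t *: M) i j) 0 1.
Proof.
set c : R^nat := fun l => (M ^+ l) i j / l`!%:R.
set b := \sum_i0 \sum_j0 `|M i0 j0|.
have b0 : 0 <= b by apply: sumr_ge0 => ? _; apply: sumr_ge0.
have Hc : forall l, `|c l| <= 1 * (b ^+ l / l`!%:R).
  move=> l; rewrite mul1r /c normrM normfV normr_nat.
  by rewrite ler_pM2r ?invr_gt0 ?ltr0n ?fact_gt0 // pow_bound.
have H1 := cvg_bound b0 Hc.
have Hc1 := diffs_bound b0 Hc.
have H2 := cvg_bound b0 Hc1.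
have H3 := cvg_bound b0 (diffs_bound b0 Hc1).
have := @pseries_snd_diffs R c 1 0 H1 H2 H3.
rewrite normr0 normr1 ltr01 => /(_ erefl) D.
have -> : (fun t : R => mexp (t *: M) i j) = (fun x => limn (pseries c x)).
  apply/funext => t; rewrite mxE; congr (limn _); apply/funext => N.
  rewrite /pseries /series /= summxE big_mkord; apply: eq_bigr => l _.
  by rewrite mxE scale_exprZ mxE /c; ring.
by case: D.
Qed.

End Ana.

Section Ana2.
Variable R : realType.

Lemma bpow n m (X : 'M[R]_n) (Y : 'M[R]_m) l :
  (block_mx X 0 0 Y) ^+ l = block_mx (X ^+ l) 0 0 (Y ^+ l).
Proof.
elim: l => [|l IH]; first by rewrite !expr0 -scalar_mx_block.
rewrite !exprS -!mulmxE IH mulmx_block.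
by rewrite !mulmx0 !mul0mx !addr0 !add0r.
Qed.

Lemma bsum n m (c : nat -> R) (X : nat -> 'M[R]_n) (Y : nat -> 'M[R]_m) N :
  \sum_(l < N) c l *: block_mx (X l) 0 0 (Y l) =
  block_mx (\sum_(l < N) c l *: X l) 0 0 (\sum_(l < N) c l *: Y l).
Proof.
elim: N => [|N IH]; first by rewrite !big_ord0 block_mx0.
by rewrite !big_ord_recr /= IH scale_block_mx add_block_mx !scaler0 !addr0.
Qed.

Lemma mexp_block n m (X : 'M[R]_n) (Y : 'M[R]_m) :
  mexp (block_mx X 0 0 Y) = block_mx (mexp X) 0 0 (mexp Y).
Proof.
apply/matrixP => i j; rewrite [LHS]mxE.
rewrite (_ : (fun N : nat => _) = fun N => block_mx (\sum_(l < N) l`!%:R^-1 *: X ^+ l) 0 0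
   (\sum_(l < N) l`!%:R^-1 *: Y ^+ l) i j); last first.
  by apply/funext => N; rewrite -(bsum (fun l => l`!%:R^-1) (fun l => X ^+ l) (fun l => Y ^+ l)); congr (fun_of_matrix _ i j); apply: eq_bigr => l _; rewrite bpow.
case: (split_ordP i) => i' ->; case: (split_ordP j) => j' ->.
- by rewrite block_mxEul mxE; congr (limn _); apply/funext => N; rewrite block_mxEul.
- rewrite block_mxEur mxE (_ : (fun N : nat => _) = fun _ => 0); first exact: lim_cst.
  by apply/funext => N; rewrite block_mxEur mxE.
- rewrite block_mxEdl mxE (_ : (fun N : nat => _) = fun _ => 0); first exact: lim_cst.
  by apply/funext => N; rewrite block_mxEdl mxE.
- by rewrite block_mxEdr mxE; congr (limn _); apply/funext => N; rewrite block_mxEdr.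
Qed.

Lemma mexp0 p : mexp (0 : 'M[R]_p) = 1%:M.
Proof.
have S1 N : \sum_(l < N.+1) (l`!%:R)^-1 *: (0 : 'M[R]_p) ^+ l = 1%:M.
  rewrite big_ord_recl big1 ?addr0; first by rewrite fact0 invr1 scale1r expr0.
  by move=> l _; rewrite expr0n /= scaler0.
apply/matrixP => i j; rewrite mxE.
apply: cvg_lim => //; rewrite -cvg_shiftS.
rewrite (_ : (fun n => _) = fun _ => 1%:M i j); first exact: cvg_cst.
by apply/funext => N /=; rewrite S1.
Qed.

End Ana2.

Section Der.
Variable R : realType.

Lemma derivable_bsum (I : Type) (s : seq I) (P : pred I) (F : I -> R -> R) x :
  (forall i, derivable (F i) x 1) -> derivable (fun t => \sum_(i <- s | P i) F i t) x 1.
Proof.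
move=> dF; elim: s => [|i s IH].
  have -> : (fun t => \sum_(i <- [::] | P i) F i t) = cst 0 by apply/funext => t; rewrite big_nil.
  exact: derivable_cst.
have -> : (fun t => \sum_(j <- i :: s | P j) F j t) =
   (fun t => if P i then F i t else 0) + (fun t => \sum_(j <- s | P j) F j t).
  by apply/funext => t; rewrite big_cons /=; case: (P i); rewrite ?add0r.
apply: derivableD => //; case: (P i) => //; exact: derivable_cst.
Qed.

Lemma derivable_bprod (I : Type) (s : seq I) (P : pred I) (F : I -> R -> R) x :
  (forall i, derivable (F i) x 1) -> derivable (fun t => \prod_(i <- s | P i) F i t) x 1.
Proof.
move=> dF; elim: s => [|i s IH].
  have -> : (fun t => \prod_(i <- [::] | P i) F i t) = cst 1 by apply/funext => t; rewrite big_nil.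
  exact: derivable_cst.
have -> : (fun t => \prod_(j <- i :: s | P j) F j t) =
   (fun t => if P i then F i t else 1) * (fun t => \prod_(j <- s | P j) F j t).
  by apply/funext => t; rewrite big_cons /=; case: (P i); rewrite ?mul1r.
apply: derivableM => //; case: (P i) => //; exact: derivable_cst.
Qed.

Lemma derivable_detF q (G : R -> nat -> nat -> R) :
  (forall a b, derivable (fun t => G t a b) 0 1) -> derivable (fun t => detF q (G t)) 0 1.
Proof.
move=> dG.
have -> : (fun t => detF q (G t)) =
   (fun t => \sum_(s : 'S_q) (-1) ^+ s * \prod_(i < q) G t i (s i)).
  apply/funext => t; rewrite /detF /determinant; apply: eq_bigr => s _.
  by congr (_ * _); apply: eq_bigr => i _; rewrite mxE.
apply: derivable_bsum => s.
have -> : (fun t => (-1) ^+ s * \prod_(i < q) G t i (s i)) =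
   cst ((-1) ^+ s) * (fun t => \prod_(i < q) G t i (s i)) by [].
apply: derivableM; first exact: derivable_cst.
exact: derivable_bprod.
Qed.

End Der.

Lemma ktuple_mem p q u : (u < 'C(p, q))%N ->
  [&& sorted ltn (ktuple p q u), all (inrange 0 p) (ktuple p q u) & size (ktuple p q u) == q].
Proof. by move=> hu; rewrite -mem_ksubs /ktuple mem_nth // size_ksubs size_iota. Qed.

Lemma mulc1 (R : comNzRingType) p q u v : (u < 'C(p, q))%N -> (v < 'C(p, q))%N ->
  mget (mulc q (1%:M : 'M[R]_p)) u v = (u == v)%:R.
Proof.
move=> hu hv; rewrite mget_mulc //.
have /and3P[su au /eqP zu] := ktuple_mem hu.
have /and3P[sv av /eqP zv] := ktuple_mem hv.
have uu : uniq (ktuple p q u) by move: su; rewrite ltn_sorted_uniq_leq => /andP[].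
have uv : uniq (ktuple p q v) by move: sv; rewrite ltn_sorted_uniq_leq => /andP[].
case: eqP => [<-|neq].
  rewrite (@eq_detF _ _ _ (fun x y => (x == y)%:R)); last first.
    move=> x y xq yq; rewrite mget1 nth_uniq ?zu //.
    have := allP au (nth 0%N (ktuple p q u) x) (mem_nth _ _); rewrite zu => /(_ xq).
    by rewrite /inrange /= => ->; rewrite andbT.
  rewrite /detF (_ : \matrix_(x < q, y < q) _ = 1%:M) ?det1 //.
  by apply/matrixP => x y; rewrite !mxE.
have [s sU sV] : exists2 s, s \in ktuple p q u & s \notin ktuple p q v.
  case: (boolP (has (fun z => z \notin ktuple p q v) (ktuple p q u))) => [/hasP [s ? ?]|/hasPn H].
    by exists s.
  exfalso; apply: neq.
  have sub : {subset ktuple p q u <= ktuple p q v}.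
    by move=> z /H; rewrite negbK.
  have [_ eqi] := uniq_min_size uu sub (eq_leq (etrans zv (esym zu))).
  have eS := irr_sorted_eq ltn_trans ltnn su sv eqi.
  have := congr1 (fun s => index s (ksubs (iota 0 p) q)) eS.
  by rewrite /ktuple !index_uniq ?uniq_ksubs // size_ksubs size_iota.
set x0 := index s (ktuple p q u).
have x0q : (x0 < q)%N by rewrite -zu index_mem.
rewrite /detF (expand_det_row _ (Ordinal x0q)) big1 // => y _.
rewrite mxE mget1 /= nth_index //.
case: eqP => [e|]; last by rewrite mul0r.
by move: sV; rewrite e mem_nth // zv.
Qed.

Section Fin.
Variable R : realType.

Lemma mget_mexp_derivable p (M : 'M[R]_p) u v :
  derivable (fun t : R => mget (mexp (t *: M)) u v) 0 1.
Proof.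
case: (boolP ((u < p) && (v < p))%N) => [/andP[hu hv]|h].
  have -> : (fun t : R => mget (mexp (t *: M)) u v) =
            (fun t => mexp (t *: M) (Ordinal hu) (Ordinal hv)).
    by apply/funext => t; rewrite (mget_ord _ hu hv).
  exact: mexp_entry_derivable.
have -> : (fun t : R => mget (mexp (t *: M)) u v) = cst 0.
  by apply/funext => t; rewrite mget_out.
exact: derivable_cst.
Qed.

Lemma f_derivable p q (M : 'M[R]_p) u v : (u < 'C(p, q))%N -> (v < 'C(p, q))%N ->
  derivable (fun t : R => mget (mulc q (mexp (t *: M))) u v) 0 1.
Proof.
move=> hu hv.
have -> : (fun t : R => mget (mulc q (mexp (t *: M))) u v) =
  (fun t => detF q (fun x y => mget (mexp (t *: M)) (nth 0%N (ktuple p q u) x) (nth 0%N (ktuple p q v) y))).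
  by apply/funext => t; rewrite mget_mulc.
apply: derivable_detF => a b; exact: mget_mexp_derivable.
Qed.

Lemma f_deriv p q (M : 'M[R]_p) u v : (u < 'C(p, q))%N -> (v < 'C(p, q))%N ->
  derive1 (fun t : R => mget (mulc q (mexp (t *: M))) u v) 0 = mget (addc q M) u v.
Proof.
move=> hu hv; rewrite (mget_ord (addc q M) hu hv) mxE; congr (derive1 _ _).
by apply/funext => t; rewrite (mget_ord _ hu hv).
Qed.

Lemma f_zero p q (M : 'M[R]_p) u v : (u < 'C(p, q))%N -> (v < 'C(p, q))%N ->
  mget (mulc q (mexp (0 *: M))) u v = (u == v)%:R.
Proof. by move=> hu hv; rewrite scale0r mexp0 mulc1. Qed.

End Fin.

Theorem theorem3 (R : realType) (n m : nat) (A : 'M[R]_n) (B : 'M[R]_m)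
  (k : nat) (hk1 : (1 <= k)%N) (hk2 : (k <= n + m)%N) :
  let C : 'M[R]_(n + m) := block_mx A 0 0 B in
  exists P : 'M[R]_('C(n + m, k)),
    is_perm_mx P /\
    mulc k C = P *m castmx (bsize_sum n m k, bsize_sum n m k) (Dmul k A B)
                 *m invmx P /\
    addc k C = P *m castmx (bsize_sum n m k, bsize_sum n m k) (Dadd k A B)
                 *m invmx P.
Proof.
move=> C; exists (perm_mx (sigma n m k)); split; first exact: perm_mx_is_perm.
split; apply/matrixP => a b; rewrite perm_conj /sigma !permE.
  by rewrite DM key.
rewrite DA mxE.
set Sa := ktuple (n + m) k a; set Sb := ktuple (n + m) k b.
have ga : goodS n m k Sa := ktuple_good (ltn_ord a).
have gb : goodS n m k Sb := ktuple_good (ltn_ord b).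
have -> : (fun t : R => mulc k (mexp (t *: C)) a b) = fun t =>
  if cnt n Sa == cnt n Sb then
    mget (mulc (k - cnt n Sa) (mexp (t *: A))) (al n k Sa) (al n k Sb) *
    mget (mulc (cnt n Sa) (mexp (t *: B))) (be n m Sa) (be n m Sb)
  else 0.
  apply/funext => t; rewrite /C scale_block_mx !scaler0 mexp_block key //.
case: eqP => e; last first.
  by rewrite (_ : (fun _ => 0) = cst 0) // derive1_cst.
have h1 := al_lt ga; have h2 := al_lt gb; have h3 := be_lt ga; have h4 := be_lt gb.
rewrite -e in h2 h4.
rewrite derive1E (_ : (fun t : R => _ * _) =
   (fun t : R => mget (mulc (k - cnt n Sa) (mexp (t *: A))) (al n k Sa) (al n k Sb)) *
   (fun t : R => mget (mulc (cnt n Sa) (mexp (t *: B))) (be n m Sa) (be n m Sb))) //.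
rewrite deriveM; try exact: f_derivable.
rewrite -!derive1E !f_deriv // /= !f_zero //.
rewrite addrC; congr (_ + _); exact: mulrC.
Qed.
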